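(* Let $q\ge1$ be an integer and let $X$ be a random variable such that $qX$ is integer-valued almost surely. Then for every integer $r\ge1$ with $\mathbb E|X|^r<\infty$, \[ \mathbb E\big(\lfloor X\rfloor^r\big)=\mathrm i^{-r}\sum_{j=0}^{q-1}\frac{d^r}{dt^r}\big(h_q(t)\varphi_X(t)\big)\Big|_{t=2\pi j} \quad\text{and}\quad \mathbb E\big(\langle X\rangle^r\big)=\mathrm i^{-r}\sum_{j=0}^{q-1}\frac{d^r}{dt^r}\big(\tilde h_q(t)\varphi_X(t)\big)\Big|_{t=2\pi j}. \]
   Context: For a random variable $Y$, $\varphi_Y(t):=\mathbb E\, e^{\mathrm i tY}$ is its characteristic function. $\lfloor x\rfloor$ is $x$ rounded down to an integer, and $\langle x\rangle:=\lfloor x+\tfrac12\rfloor$ is $x$ rounded to the nearest integer, with ties broken upward. Define \[ h_q(t):=\frac1q\sum_{k=0}^{q-1}e^{-\mathrm i tk/q}. \] If $q$ is even, define $\tilde h_q(t):=\frac1q\sum_{k=-q/2}^{q/2-1}e^{-\mathrm i tk/q}$. If $q$ is odd, define $\tilde h_q(t):=\frac1q\sum_{k=-(q-1)/2}^{(q-1)/2}e^{-\mathrm i tk/q}$. *)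

(* Defs.v *)
From HB Require Import structures.
From mathcomp Require Import all_boot all_order all_algebra.
From mathcomp Require Import all_classical all_reals all_analysis.
From mathcomp Require Import complex.
Set Implicit Arguments. Unset Strict Implicit. Unset Printing Implicit Defensive.
Import Order.TTheory GRing.Theory Num.Theory.
Import numFieldNormedType.Exports.
Local Open Scope ring_scope.
Local Open Scope complex_scope.

Section Defs.
Variable R : realType.

Definition expi (x : R) : R[i] := cos x +i* sin x.

Definition h_q (q : nat) (t : R) : R[i] :=
  (q%:R^-1)%:C * \sum_(k < q) expi (- (t * k%:R / q%:R)).

(* tilde h_q(t) = (1/q) sum_{k} e^{-i t k / q}, where k ranges over
   -q/2 .. q/2-1 (q even) or -(q-1)/2 .. (q-1)/2 (q odd);
   written as k = j - q/2 resp. k = j - (q-1)/2 with j = 0..q-1. *)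
Definition ht_q (q : nat) (t : R) : R[i] :=
  if ~~ odd q then
    (q%:R^-1)%:C * \sum_(j < q) expi (- (t * ((j%:Z - (q %/ 2)%:Z)%:~R) / q%:R))
  else
    (q%:R^-1)%:C * \sum_(j < q) expi (- (t * ((j%:Z - ((q - 1) %/ 2)%:Z)%:~R) / q%:R)).

Definition charfun {d} {T : measurableType d} (P : probability T R) (X : T -> R)
  (t : R) : R[i] :=
  (fine ('E_P[fun w => cos (t * X w)])%E) +i* (fine ('E_P[fun w => sin (t * X w)])%E).

Definition cderive (n : nat) (f : R -> R[i]) (t : R) : R[i] :=
  (derive1n n (fun s => @complex.Re R (f s) : R) t) +i* (derive1n n (fun s => @complex.Im R (f s) : R) t).

End Defs.

(* Main.v *)
Require Import Defs.
From HB Require Import structures.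
From mathcomp Require Import all_boot all_order all_algebra.
From mathcomp Require Import all_classical all_reals all_analysis.
From mathcomp Require Import complex.
From mathcomp Require Import measurable_realfun.
From mathcomp Require Import lra ring.
Import Order.TTheory GRing.Theory Num.Theory.
Import numFieldNormedType.Exports.
Local Open Scope ring_scope.
Local Open Scope complex_scope.
Lemma is_derive_cos_aff (R : realType) (c y phi t : R) :
  is_derive t 1 (fun t => c * cos (t * y + phi)) (c * y * cos (t * y + phi + pi / 2)).
Proof.
have h1 : is_derive t 1 (y \*: (@id R) + cst phi) (y *: 1 + 0).
  exact: is_deriveD.
have h2 := is_derive1_comp (is_derive_cos _) h1.
have h3 := is_deriveZ c h2.
have E : (fun t0 : R => c * cos (t0 * y + phi)) = c \*: (cos \o (y \*: (@id R) + cst phi)).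
  apply/funext => s /=; rewrite /GRing.scale_fun /=; congr (_ * cos _). by rewrite mulrC.
rewrite E. eapply is_derive_eq; [exact: h3|].
rewrite cosDpihalf /= mulrC.
change (c * ((y * 1 + 0) * - sin (y * t + phi)) = c * y * - sin (t * y + phi)).
by rewrite mulr1 addr0 mulrA [y * t]mulrC.
Qed.

Lemma pow_bnd (R : realType) (x : R) n r : 0 <= x -> (n <= r)%N ->
  (x + 1) ^+ n <= 2 ^+ r * (1 + x ^+ r).
Proof.
move=> x0 nr.
have x10 : 0 <= x + 1 by lra.
have h2 : 1 <= (2 : R) by lra.
have xr0 : 0 <= x ^+ r by exact: exprn_ge0.
have [x1|x1] := lerP x 1.
- apply: (@le_trans _ _ (2 ^+ n)).
    by apply: lerXn2r; rewrite ?nnegrE //; lra.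
  apply: (@le_trans _ _ (2 ^+ r)); first exact: ler_weXn2l.
  by rewrite ler_peMr ?exprn_ge0 //; lra.
- apply: (@le_trans _ _ ((2 * x) ^+ n)).
    by apply: lerXn2r; rewrite ?nnegrE //; lra.
  rewrite exprMn; apply: (@le_trans _ _ (2 ^+ r * x ^+ r)).
    apply: ler_pM; rewrite ?exprn_ge0 //; try lra.
      exact: ler_weXn2l.
    by apply: ler_weXn2l => //; lra.
  by rewrite ler_pM2l ?exprn_gt0 //; lra.
Qed.

Section Fam.
Context (R : realType) (d : measure_display) (T : measurableType d) (X : T -> R).
Variables (q m : nat) (th : R).

Definition sh (j : nat) : R := ((j%:Z - m%:Z)%:~R / q%:R).
Definition gf (n : nat) (t : R) (w : T) : R :=
  q%:R^-1 * \sum_(j < q) (X w - sh j) ^+ n * cos (t * (X w - sh j) + (th + n%:R * (pi / 2))).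

Lemma gf_derive n (t : R) w : is_derive t 1 (gf n ^~ w) (gf n.+1 t w).
Proof.
have E : gf n ^~ w = q%:R^-1 \*: \sum_(j < q) (fun t => (X w - sh j) ^+ n * cos (t * (X w - sh j) + (th + n%:R * (pi / 2)))).
  by apply/funext => s; rewrite /gf /GRing.scale_fun /= fct_sumE.
rewrite E; eapply is_derive_eq.
  apply: is_deriveZ; apply: is_derive_sum => j; exact: is_derive_cos_aff.
rewrite /gf; congr (_ * _); apply: eq_bigr => j _.
rewrite scaler0 add0r addr0.
set y := X w - sh j.
have -> : t * y + (th + n.+1%:R * (pi / 2)) = t * y + (th + n%:R * (pi / 2)) + pi / 2.
  by rewrite -addn1 natrD; ring.
rewrite cosDpihalf exprSr.
change (y ^+ n * (- sin (t * y + (th + n%:R * (pi / 2))) * (y * 1)) = y ^+ n * y * - sin (t * y + (th + n%:R * (pi / 2)))).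
ring.
Qed.

Lemma gf_meas n t : measurable_fun setT X -> measurable_fun setT (gf n t).
Proof.
move=> mX; rewrite /gf; apply: measurable_funM; first exact: measurable_cst.
apply: measurable_sum => j; apply: measurable_funM.
  by apply: measurable_funX; apply: measurable_funB => //; exact: measurable_cst.
apply: (measurableT_comp (f := cos) (g := fun w => t * (X w - sh j) + (th + n%:R * (pi / 2)))).
  by apply: continuous_measurable_fun; exact: continuous_cos.
apply: measurable_funD; last exact: measurable_cst.
apply: measurable_funM; first exact: measurable_cst.
by apply: measurable_funB => //; exact: measurable_cst.
Qed.

Lemma sh_le1 (j : nat) : (1 <= q)%N -> (m <= q)%N -> (j < q)%N -> `|sh j| <= 1.
Proof.
move=> q1 mq jq; rewrite /sh intrB !pmulrn normrM normfV.
have q0 : (0 : R) < q%:R by rewrite ltr0n.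
rewrite (gtr0_norm q0) ler_pdivrMr // mul1r ler_norml.
have : (j%:R : R) <= q%:R by rewrite ler_nat ltnW.
have : (m%:R : R) <= q%:R by rewrite ler_nat.
rewrite -!pmulrn.
have : (0 : R) <= j%:R by [].
have : (0 : R) <= m%:R by [].
move=> *; apply/andP; split; lra.
Qed.

Lemma gf_bnd r n t w : (1 <= q)%N -> (m <= q)%N -> (n <= r)%N ->
  `|gf n t w| <= 2 ^+ r * (1 + `|X w| ^+ r).
Proof.
move=> q1 mq nr; rewrite /gf normrM.
have q0 : (0 : R) < q%:R by rewrite ltr0n.
rewrite normfV (gtr0_norm q0) ler_pdivrMl //.
apply: (le_trans (ler_norm_sum _ _ _)).
apply: (@le_trans _ _ (\sum_(j < q) 2 ^+ r * (1 + `|X w| ^+ r))); last first.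
  by rewrite sumr_const card_ord mulr_natl.
apply: ler_sum => j _; rewrite normrM normrX.
have hc : `|cos (t * (X w - sh j) + (th + n%:R * (pi / 2)))| <= 1.
  by rewrite ler_norml cos_le1 cos_geN1.
apply: (@le_trans _ _ (`|X w - sh j| ^+ n)).
  by rewrite ler_piMr ?exprn_ge0.
apply: (@le_trans _ _ ((`|X w| + 1) ^+ n)); last exact: pow_bnd.
apply: lerXn2r; rewrite ?nnegrE //.
apply: (le_trans (ler_normB _ _)); rewrite lerD2l; exact: sh_le1.
Qed.
End Fam.
Section Gen.
Context (R : realType) (d : measure_display) (T : measurableType d) (P : probability T R).
Local Open Scope classical_set_scope.

Lemma derive1n_under (g : nat -> R -> T -> R) (G : T -> R) (r : nat) :
  (forall n (t : R) w, is_derive t 1 (g n ^~ w) (g n.+1 t w)) ->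
  (forall n t, measurable_fun setT (g n t)) ->
  (forall n t w, (n <= r)%N -> `|g n t w| <= G w) ->
  P.-integrable setT (EFin \o G) ->
  forall n, (n <= r)%N ->
  derive1n n (fun t => \int[P]_w g 0%N t w) = (fun t => \int[P]_w g n t w).
Proof.
move=> gd gm gb Gi; elim=> [|n IH] nr; first by rewrite derive1n0.
rewrite derive1nS IH ?(ltnW nr) //; apply/funext => t.
have intg : forall x, P.-integrable setT (EFin \o g n x).
  move=> x; apply: le_integrable Gi => //; first exact/measurable_EFinP.
  move=> w _ /=; rewrite lee_fin (le_trans (gb _ _ _ (ltnW nr))) //.
  exact: ler_norm.
have G0 : forall w, 0 <= G w by move=> w; apply: le_trans (gb 0%N t w isT).
rewrite (@differentiation_under_integral R d T P (g n) setT measurableT t (t - 1) (t + 1) _ _ _ G G0 Gi).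
- apply: eq_Rintegral => w _; rewrite /partial1of2 derive1E.
  by rewrite (@derive_val _ _ _ _ _ _ _ (gd n t w)).
- rewrite /= in_itv /=; apply/andP; split; lra.
- by move=> x _; exact: intg.
- by move=> x y _ _; case: (gd n x y).
- move=> x y _ _; rewrite /partial1of2 derive1E.
  by rewrite (@derive_val _ _ _ _ _ _ _ (gd n x y)) gb.
Qed.
End Gen.

Section Int.
Context (R : realType) (d : measure_display) (T : measurableType d) (P : probability T R).
Local Open Scope classical_set_scope.

Lemma intG (X : T -> R) r : measurable_fun setT X ->
  ('E_P[fun w => (`|X w| ^+ r)%R] < +oo)%E ->
  P.-integrable setT (EFin \o (fun w => 2 ^+ r * (1 + `|X w| ^+ r))).
Proof.
move=> mX hE.
have mXr : measurable_fun setT (fun w => `|X w| ^+ r).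
  by apply: measurable_funX; apply: measurableT_comp => //; exact: normr_measurable.
have i1 : P.-integrable setT (EFin \o (fun w => `|X w| ^+ r)).
  apply/integrableP; split; first exact/measurable_EFinP.
  under eq_integral do rewrite /= ger0_norm ?exprn_ge0 //.
  by move: hE; rewrite unlock.
have i0 : P.-integrable setT (EFin \o cst (1 : R)) by exact: finite_measure_integrable_cst.
have := integrableZl measurableT (2 ^+ r) (integrableD measurableT i0 i1).
apply: eq_integrable => // w _ /=.

Qed.
End Int.
Section Cx.
Context (R : realType).

Lemma sumC (I : Type) (s : seq I) (f g : I -> R) :
  \sum_(i <- s) (f i +i* g i) = (\sum_(i <- s) f i) +i* (\sum_(i <- s) g i).
Proof. by elim: s => [|a s IH]; rewrite ?big_nil // !big_cons IH. Qed.

Lemma ReSum (I : Type) (s : seq I) (z : I -> R[i]) :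
  complex.Re (\sum_(i <- s) z i) = \sum_(i <- s) complex.Re (z i).
Proof.
elim: s => [|a s IH]; rewrite ?big_nil // !big_cons -IH.
by case: (z a) => ? ?; case: (\sum_(i <- s) z i).
Qed.

Lemma ImSum (I : Type) (s : seq I) (z : I -> R[i]) :
  complex.Im (\sum_(i <- s) z i) = \sum_(i <- s) complex.Im (z i).
Proof.
elim: s => [|a s IH]; rewrite ?big_nil // !big_cons -IH.
by case: (z a) => ? ?; case: (\sum_(i <- s) z i).
Qed.

Lemma expiD (a b : R) : expi (a + b) = expi a * expi b.
Proof.
rewrite /expi cosD sinD.
rewrite -[(_ +i* _) * (_ +i* _)]/(_ +i* _).
by congr (_ +i* _); ring.
Qed.

Lemma expi0 : expi (0 : R) = 1.
Proof. by rewrite /expi cos0 sin0. Qed.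

Lemma expiMn (a : R) (n : nat) : expi (n%:R * a) = expi a ^+ n.
Proof.
elim: n => [|n IH]; first by rewrite mul0r expi0 expr0.
by rewrite -addn1 natrD mulrDl mul1r expiD IH exprD expr1.
Qed.

Lemma expi2pi : expi (2 * pi : R) = 1.
Proof. by rewrite /expi mulr_natl cos2pi sin2pi. Qed.

Lemma expi_2piZ (L : int) : expi (2 * pi * L%:~R : R) = 1.
Proof.
have hn : forall n : nat, expi (2 * pi * n%:R : R) = 1.
  by move=> n; rewrite mulrC expiMn expi2pi expr1n.
case: L => n; first exact: hn.
have := hn n.+1.
have E : 2 * pi * (Negz n)%:~R + 2 * pi * n.+1%:R = 0 :> R.
  by rewrite NegzE intrN -pmulrn mulrN addNr.
move: (expiD (2 * pi * (Negz n)%:~R) (2 * pi * n.+1%:R)).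
rewrite E expi0 => + h; rewrite h mulr1. by [].
Qed.

Lemma expi_ne1 (th : R) : 0 < th < 2 * pi -> expi th != 1.
Proof.
move=> /andP[t0 t2]; apply/negP => /eqP E.
have Es : sin th = 0 by move: (congr1 (@complex.Im R) E).
have Ec : cos th = 1 by move: (congr1 (@complex.Re R) E).
have pi0 : 0 < pi :> R by exact: pi_gt0.
have [tp|tp] := ltrP th pi.
  by move: (@sin_gt0_pi R th); rewrite t0 tp Es ltxx => /(_ isT).
move: tp; rewrite le_eqVlt => /orP[/eqP tp|tp].
  by move: Ec; rewrite -tp cospi => h; lra.
have h := sinDpi (th - pi); rewrite subrK in h.
have : 0 < sin (th - pi) by apply: sin_gt0_pi; apply/andP; split; lra.
by rewrite -oppr_lt0 -h Es ltxx.
Qed.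

Lemma RU (q : nat) (M : int) : (1 <= q)%N ->
  \sum_(j < q) expi (2 * pi * j%:R * (M%:~R / q%:R) : R) =
  if (q%:Z %| M)%Z then (q%:R : R)%:C else 0.
Proof.
move=> q1.
have q0 : (q%:R : R) != 0 by rewrite pnatr_eq0 -lt0n.
set a := 2 * pi * (M%:~R / q%:R) : R.
have E : forall j : 'I_q, expi (2 * pi * j%:R * (M%:~R / q%:R) : R) = expi a ^+ j.
  by move=> j; rewrite -expiMn /a; congr expi; ring.
rewrite (eq_bigr _ (fun j _ => E j)).
case: ifPn => [/dvdzP[L EM]|ndvd].
  have -> : a = 2 * pi * L%:~R.
    by rewrite /a EM intrM -[(q%:Z)%:~R]/(q%:R) mulfK.
  rewrite expi_2piZ.
  under eq_bigr do rewrite expr1n.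
  by rewrite sumr_const card_ord (rmorph_nat (real_complex R)).
have wq : expi a ^+ q = 1.
  rewrite -expiMn (_ : q%:R * a = 2 * pi * M%:~R) ?expi_2piZ // /a.
  by field.
have wn1 : expi a != 1.
  have -> : a = 2 * pi * ((M %/ q%:Z)%Z)%:~R + 2 * pi * (((M %% q%:Z)%Z)%:~R / q%:R).
    rewrite /a {1}(divz_eq M q%:Z) intrD intrM -[(q%:Z)%:~R]/(q%:R).
    field; done.
  rewrite expiD expi_2piZ mul1r; apply: expi_ne1.
  have r0 : (0 < M %% q%:Z)%Z.
    rewrite lt_neqAle modz_ge0 ?andbT; last by rewrite eqz_nat -lt0n.
    by rewrite eq_sym; apply/negP => /eqP/dvdz_mod0P; apply/negP.
  have rq : (M %% q%:Z < q%:Z)%Z by rewrite ltz_pmod // ltz_nat.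
  have r0R : (0 : R) < ((M %% q%:Z)%Z)%:~R by rewrite ltr0z.
  have rqR : (((M %% q%:Z)%Z)%:~R : R) < q%:R by rewrite -[(q%:R : R)]/((q%:Z)%:~R) ltr_int.
  have qpos : (0 : R) < q%:R by rewrite ltr0n.
  have pi0 : 0 < pi :> R by exact: pi_gt0.
  apply/andP; split.
    by apply: mulr_gt0; [apply: mulr_gt0 => //; lra|apply: divr_gt0].
  rewrite -[X in _ < X]mulr1 ltr_pM2l; last lra.
  by rewrite ltr_pdivrMr // mul1r.
have := subrX1 (expi a) q.
rewrite wq subrr => /esym/eqP; rewrite mulf_eq0 subr_eq0 (negbTE wn1) /=.
by move/eqP.
Qed.

Lemma RUc (q : nat) (M : int) (ph : R) : (1 <= q)%N ->
  \sum_(j < q) cos (2 * pi * j%:R * (M%:~R / q%:R) + ph) =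
  if (q%:Z %| M)%Z then q%:R * cos ph else 0.
Proof.
move=> q1.
have E : forall j : 'I_q, cos (2 * pi * j%:R * (M%:~R / q%:R) + ph) =
   complex.Re (expi (2 * pi * j%:R * (M%:~R / q%:R)) * expi ph).
  by move=> j; rewrite -expiD.
rewrite (eq_bigr _ (fun j _ => E j)) -ReSum -mulr_suml RU //.
case: ifP => _; last by rewrite mul0r.
rewrite /expi -[(_ +i* _) * (_ +i* _)]/(_ +i* _) /=.
by rewrite mul0r subr0.
Qed.
End Cx.

Section PW.
Context (R : realType) (d : measure_display) (T : measurableType d) (X : T -> R).
Variables (q m : nat) (th c : R).
Hypothesis q1 : (1 <= q)%N.
Hypothesis hc : m%:R <= c * q%:R < m%:R + 1.

Lemma gf_pw r w (N : int) : q%:R * X w = N%:~R ->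
  \sum_(j < q) gf R d T X q m th r (2 * pi * j%:R) w =
  ((Num.floor (X w + c))%:~R) ^+ r * cos (th + r%:R * (pi / 2)).
Proof.
move=> hN; have /andP[hc1 hc2] := hc.
have qpos : (0:R) < q%:R by rewrite ltr0n.
have q0 : (q%:R:R) != 0 by rewrite gt_eqF.
have Xw : X w = N%:~R / q%:R by rewrite -hN; field.
set ph := th + r%:R * (pi / 2).
have hM : forall k : nat, X w - sh R q m k = (N + m%:Z - k%:Z)%:~R / q%:R.
  by move=> k; rewrite Xw /sh !(intrD, intrN); field.
rewrite /gf -mulr_sumr exchange_big /=.
have Ek : forall k : 'I_q, \sum_(j < q) (X w - sh R q m k) ^+ r *
     cos (2 * pi * j%:R * (X w - sh R q m k) + ph) =
   (X w - sh R q m k) ^+ r *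
     (if (q%:Z %| (N + m%:Z - k%:Z))%Z then q%:R * cos ph else 0).
  by move=> k; rewrite -mulr_sumr; congr (_ * _); rewrite hM; exact: RUc.
rewrite (eq_bigr _ (fun k _ => Ek k)).
set Z := (N + m%:Z)%Z.
have qz0 : (q%:Z != 0) by rewrite eqz_nat -lt0n.
have rho_eq : (`|(Z %% q%:Z)%Z|%N)%:Z = (Z %% q%:Z)%Z by rewrite gez0_abs // modz_ge0.
have rho_lt : (`|(Z %% q%:Z)%Z|%N < q)%N.
  by rewrite -ltz_nat rho_eq ltz_pmod // ltz_nat.
pose k0 : 'I_q := Ordinal rho_lt.
have dvdE : forall k : 'I_q, (q%:Z %| Z - k%:Z)%Z = (k == k0).
  move=> k; rewrite -eqz_mod_dvd -/Z (modz_small (m := k%:Z)); last first.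
    by rewrite ltz_nat ltn_ord andbT.
  by rewrite -val_eqE /= -rho_eq eqz_nat eq_sym.
rewrite (bigD1 k0) // big1 ?addr0; last first.
  by move=> k kne; rewrite dvdE (negbTE kne) mulr0.
rewrite dvdE eqxx hM.
have ZE : (N + m%:Z - k0%:Z = (Z %/ q%:Z)%Z * q%:Z)%Z.
  by rewrite /= rho_eq -/Z {1}(divz_eq Z q%:Z) addrK.
rewrite ZE intrM -[((q%:Z)%:~R : R)]/(q%:R) mulfK //.
have -> : Num.floor (X w + c) = (Z %/ q%:Z)%Z.
  apply/eqP; rewrite floor_eq.
  have hZ : (Z%:~R : R) = ((Z %/ q%:Z)%Z)%:~R * q%:R + ((Z %% q%:Z)%Z)%:~R.
    by rewrite {1}(divz_eq Z q%:Z) intrD intrM.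
  have hZ' : (Z%:~R : R) = N%:~R + m%:R by rewrite /Z intrD.
  have r0 : (0 : R) <= ((Z %% q%:Z)%Z)%:~R by rewrite ler0z modz_ge0.
  have rq : ((Z %% q%:Z)%Z)%:~R + 1 <= (q%:R : R).
    rewrite -[1]/((1%:Z)%:~R) -intrD -[(q%:R : R)]/((q%:Z)%:~R) ler_int.
    by rewrite lezD1 ltz_pmod // ltz_nat.
  rewrite intrD Xw.
  move: hZ r0 rq; rewrite hZ'.
  set Qr := ((Z %/ q%:Z)%Z)%:~R : R.
  set rr := ((Z %% q%:Z)%Z)%:~R : R.
  set Nr := N%:~R : R.
  move=> hZ r0 rq.
  have key : q%:R * (Nr / q%:R + c - Qr) = rr - m%:R + c * q%:R.
    have -> : q%:R * (Nr / q%:R + c - Qr) = Nr + c * q%:R - q%:R * Qr by field.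
    lra.
  apply/andP; split.
    rewrite -subr_ge0 -(pmulr_rge0 _ qpos) key; lra.
  rewrite -subr_gt0 -(pmulr_rgt0 _ qpos).
  have -> : q%:R * (Qr + 1 - (Nr / q%:R + c)) = q%:R - q%:R * (Nr / q%:R + c - Qr) by ring.
  rewrite key; lra.
rewrite /= addr0; by field.
Qed.
End PW.

Section Main.
Context (R : realType) (d : measure_display) (T : measurableType d) (P : probability T R).
Variable X : T -> R.
Hypothesis mX : measurable_fun setT X.
Local Open Scope classical_set_scope.

Lemma Rint_sum (I : Type) (s : seq I) (f : I -> T -> R) :
  (forall i, P.-integrable setT (EFin \o f i)) ->
  \int[P]_w (\sum_(i <- s) f i w) = \sum_(i <- s) \int[P]_w f i w.
Proof.
move=> fi; elim: s => [|a s IH].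
  rewrite big_nil; under eq_Rintegral do rewrite big_nil.
  by rewrite /Rintegral integral0.
rewrite big_cons -IH; under eq_Rintegral do rewrite big_cons.
rewrite RintegralD //.
have := integrable_sum measurableT s (P := xpredT) (fun i _ => fi i).
apply: eq_integrable => // w _ /=.
by rewrite sumEFin.
Qed.

Lemma int_bnd (f G : T -> R) : measurable_fun setT f -> (forall w, `|f w| <= G w) ->
  P.-integrable setT (EFin \o G) -> P.-integrable setT (EFin \o f).
Proof.
move=> mf fG Gi; apply: le_integrable Gi => //; first exact/measurable_EFinP.
by move=> w _ /=; rewrite lee_fin (le_trans (fG w)) // ler_norm.
Qed.

Lemma mcos (t : R) : measurable_fun setT (fun w => cos (t * X w)).
Proof.
apply: (measurableT_comp (f := cos) (g := fun w => t * X w)).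
  by apply: continuous_measurable_fun; exact: continuous_cos.
by apply: measurable_funM => //; exact: measurable_cst.
Qed.

Lemma msin (t : R) : measurable_fun setT (fun w => sin (t * X w)).
Proof.
apply: (measurableT_comp (f := sin) (g := fun w => t * X w)).
  by apply: continuous_measurable_fun; exact: continuous_sin.
by apply: measurable_funM => //; exact: measurable_cst.
Qed.

Lemma icos (t : R) : P.-integrable setT (EFin \o (fun w => cos (t * X w))).
Proof.
apply: (@int_bnd _ (cst 1)); first exact: mcos.
  by move=> w; rewrite ler_norml cos_le1 cos_geN1.
exact: finite_measure_integrable_cst.
Qed.

Lemma isin (t : R) : P.-integrable setT (EFin \o (fun w => sin (t * X w))).
Proof.
apply: (@int_bnd _ (cst 1)); first exact: msin.
  by move=> w; rewrite ler_norml sin_le1 sin_geN1.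
exact: finite_measure_integrable_cst.
Qed.

Lemma lin_cs (q : nat) (al be : 'I_q -> R) (k t : R) :
  \int[P]_w (k * \sum_(j < q) (al j * cos (t * X w) + be j * sin (t * X w))) =
  k * \sum_(j < q) (al j * \int[P]_w cos (t * X w) + be j * \int[P]_w sin (t * X w)).
Proof.
have ij : forall j, P.-integrable setT (EFin \o (fun w => al j * cos (t * X w) + be j * sin (t * X w))).
  move=> j.
  have := integrableD measurableT (integrableZl measurableT (al j) (icos t)) (integrableZl measurableT (be j) (isin t)).
  by apply: eq_integrable => // w _ /=; rewrite EFinD !EFinM.
rewrite RintegralZl //; last first.
  have := integrable_sum measurableT (index_enum 'I_q) (P := xpredT) (fun i _ => ij i).
  by apply: eq_integrable => // w _ /=; rewrite sumEFin.
rewrite Rint_sum //; congr (_ * _); apply: eq_bigr => j _.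
rewrite RintegralD //.
- by rewrite !RintegralZl //; [exact: isin|exact: icos].
- have := integrableZl measurableT (al j) (icos t).
  by apply: eq_integrable => // w _ /=; rewrite !EFinM.
- have := integrableZl measurableT (be j) (isin t).
  by apply: eq_integrable => // w _ /=; rewrite !EFinM.
Qed.

Definition Hm (q m : nat) (t : R) : R[i] :=
  (q%:R^-1)%:C * \sum_(j < q) expi (- (t * ((j%:Z - m%:Z)%:~R) / q%:R)).

Lemma EC (t : R) : fine 'E_P[fun w => cos (t * X w)] = \int[P]_w cos (t * X w).
Proof. by rewrite unlock. Qed.
Lemma ES (t : R) : fine 'E_P[fun w => sin (t * X w)] = \int[P]_w sin (t * X w).
Proof. by rewrite unlock. Qed.

Lemma Ee (q m : nat) (t : R) (j : nat) : expi (- (t * ((j%:Z - m%:Z)%:~R) / q%:R)) =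
  cos (t * sh R q m j) +i* (- sin (t * sh R q m j)).
Proof. by rewrite /expi /sh mulrA cosN sinN. Qed.

Lemma ReM1 q m t : complex.Re (Hm q m t * charfun P X t) = \int[P]_w gf R d T X q m 0 0 t w.
Proof.
rewrite /Hm (eq_bigr _ (fun (j : 'I_q) _ => Ee q m t j)) sumC /charfun EC ES -complexr0.
rewrite -[(_ +i* _) * (_ +i* _)]/(_ +i* _).
rewrite /=.
have -> : \int[P]_w gf R d T X q m 0 0 t w = \int[P]_w (q%:R^-1 * \sum_(j < q)
    (cos (t * sh R q m j) * cos (t * X w) + sin (t * sh R q m j) * sin (t * X w))).
  apply: eq_Rintegral => w _; rewrite /gf; congr (_ * _); apply: eq_bigr => j _.
  rewrite expr0 mul1r mul0r !addr0 mulrBr cosB; ring.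
rewrite lin_cs.
rewrite big_split /= -!mulr_suml sumrN; ring.
Qed.

Lemma ImM1 q m t : complex.Im (Hm q m t * charfun P X t) = \int[P]_w gf R d T X q m (- (pi / 2)) 0 t w.
Proof.
rewrite /Hm (eq_bigr _ (fun (j : 'I_q) _ => Ee q m t j)) sumC /charfun EC ES -complexr0.
rewrite -[(_ +i* _) * (_ +i* _)]/(_ +i* _).
rewrite /=.
have -> : \int[P]_w gf R d T X q m (- (pi / 2)) 0 t w = \int[P]_w (q%:R^-1 * \sum_(j < q)
    (- sin (t * sh R q m j) * cos (t * X w) + cos (t * sh R q m j) * sin (t * X w))).
  apply: eq_Rintegral => w _; rewrite /gf; congr (_ * _); apply: eq_bigr => j _.
  rewrite expr0 mul1r mul0r !addr0 cosBpihalf mulrBr sinB; ring.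
rewrite lin_cs.
rewrite big_split /= -!mulr_suml sumrN; ring.
Qed.

Lemma RintAE (f g : T -> R) : measurable_fun setT f -> measurable_fun setT g ->
  {ae P, forall w, f w = g w} -> \int[P]_w f w = \int[P]_w g w.
Proof.
move=> mf mg hae; rewrite /Rintegral; congr fine.
apply: ae_eq_integral => //; try exact/measurable_EFinP.
by apply: filterS hae => w h _; rewrite /= h.
Qed.

Lemma fl_nd : nondecreasing_fun (fun y : R => ((Num.floor y)%:~R : R)).
Proof. by move=> x y xy; rewrite ler_int le_floor. Qed.

Lemma mfl (c : R) r : measurable_fun setT (fun w => ((Num.floor (X w + c))%:~R : R) ^+ r).
Proof.
apply: measurable_funX.
apply: (measurableT_comp (f := fun y : R => ((Num.floor y)%:~R : R)) (g := fun w => X w + c)).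
  exact: nondecreasing_measurable fl_nd.
by apply: measurable_funD => //; exact: measurable_cst.
Qed.

Lemma fl_bnd (c : R) r w : 0 <= c < 1 ->
  `|((Num.floor (X w + c))%:~R : R) ^+ r| <= 2 ^+ r * (1 + `|X w| ^+ r).
Proof.
move=> /andP[c0 c1]; rewrite normrX.
apply: le_trans (@pow_bnd R `|X w| r r _ (leqnn r)) => //.
apply: lerXn2r; rewrite ?nnegrE //.
have h1 := floor_le (X w + c).
have h2 := floorD1_gt (X w + c).
rewrite intrD in h2.
have n1 := ler_norm (X w).
have n2 : - X w <= `|X w| by rewrite -normrN ler_norm.
rewrite ler_norml; set F := ((Num.floor (X w + c))%:~R : R) in h1 h2 *.
have h3 : ((1 : int)%:~R : R) = 1 by []. rewrite h3 in h2.
apply/andP; split; lra.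
Qed.

Lemma deriv_part q m th r : (1 <= q)%N -> (m <= q)%N ->
  ('E_P[fun w => (`|X w| ^+ r)%R] < +oo)%E ->
  derive1n r (fun t => \int[P]_w gf R d T X q m th 0 t w) =
  (fun t => \int[P]_w gf R d T X q m th r t w).
Proof.
move=> q1 mq hE.
apply: (@derive1n_under R d T P (fun n => gf R d T X q m th n)
          (fun w => 2 ^+ r * (1 + `|X w| ^+ r)) r) => //.
- by move=> n t w; exact: gf_derive.
- by move=> n t; exact: gf_meas.
- by move=> n t w nr; exact: gf_bnd.
- exact: intG.
Qed.

Lemma sum_part q m th c r : (1 <= q)%N -> (m <= q)%N ->
  m%:R <= c * q%:R < m%:R + 1 -> 0 <= c < 1 ->
  {ae P, forall w, (q%:R * X w) \is a Num.int} ->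
  ('E_P[fun w => (`|X w| ^+ r)%R] < +oo)%E ->
  \sum_(j < q) \int[P]_w gf R d T X q m th r (2 * pi * j%:R) w =
  (\int[P]_w ((Num.floor (X w + c))%:~R ^+ r)) * cos (th + r%:R * (pi / 2)).
Proof.
move=> q1 mq hc hc' hq hE.
have Gi := @intG R d T P X r mX hE.
rewrite -Rint_sum; last first.
  move=> j; apply: (@int_bnd _ (fun w => 2 ^+ r * (1 + `|X w| ^+ r))) => //.
    exact: gf_meas.
  by move=> w; exact: gf_bnd.
rewrite -RintegralZr //; last first.
  apply: (@int_bnd _ (fun w => 2 ^+ r * (1 + `|X w| ^+ r))) => //.
    exact: mfl.
  by move=> w; exact: fl_bnd.
apply: RintAE.
- by apply: measurable_sum => j; exact: gf_meas.
- by apply: measurable_funM; [exact: mfl|exact: measurable_cst].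
- apply: filterS hq => w /intrP[N hN].
  by rewrite -(@gf_pw R d T X q m th c q1 hc r w N hN).
Qed.

Lemma imagE : (@Num.imaginary _ : R[i]) = Complex 0 1.
Proof. by []. Qed.

Lemma expi_pihalf : expi (pi / 2 : R) = Complex 0 1.
Proof. by rewrite /expi cos_pihalf sin_pihalf. Qed.

Lemma i_neq0 : (Complex 0 1 : R[i]) != 0.
Proof.
apply/eqP => /(congr1 (@complex.Im R)) /= /eqP; by rewrite oner_eq0.
Qed.

Lemma main_gen q m c r : (1 <= q)%N -> (m <= q)%N ->
  m%:R <= c * q%:R < m%:R + 1 -> 0 <= c < 1 ->
  {ae P, forall w, (q%:R * X w) \is a Num.int} ->
  ('E_P[fun w => (`|X w| ^+ r)%R] < +oo)%E ->
  (fine ('E_P[fun w => (((Num.floor (X w + c))%:~R : R) ^+ r)%R])%E)%:C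
     = 'i ^- r * \sum_(j < q) cderive r (fun t => Hm q m t * charfun P X t) (2 * pi * j%:R).
Proof.
move=> q1 mq hc hc' hq hE.
have hRe : (fun s => complex.Re (Hm q m s * charfun P X s)) =
    (fun t => \int[P]_w gf R d T X q m 0 0 t w) by apply/funext => s; exact: ReM1.
have hIm : (fun s => complex.Im (Hm q m s * charfun P X s)) =
    (fun t => \int[P]_w gf R d T X q m (- (pi / 2)) 0 t w) by apply/funext => s; exact: ImM1.
have E : forall t, cderive r (fun t => Hm q m t * charfun P X t) t =
    (\int[P]_w gf R d T X q m 0 r t w) +i* (\int[P]_w gf R d T X q m (- (pi / 2)) r t w).
  by move=> t; rewrite /cderive hRe hIm !deriv_part.
rewrite (eq_bigr _ (fun j _ => E _)) sumC !(@sum_part q m _ c) //.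
have -> : fine 'E_P[fun w => (((Num.floor (X w + c))%:~R : R) ^+ r)%R] =
   \int[P]_w (((Num.floor (X w + c))%:~R : R) ^+ r) by rewrite unlock.
set A := \int[P]_w _.
rewrite add0r addrC cosBpihalf.
have -> : (A * cos (r%:R * (pi / 2))) +i* (A * sin (r%:R * (pi / 2))) = A%:C * 'i ^+ r.
  rewrite imagE -expi_pihalf -expiMn /expi -complexr0.
  rewrite -[(_ +i* _) * (_ +i* _)]/(_ +i* _) /=.
  by congr (_ +i* _); ring.
by rewrite imagE mulrCA mulVf ?mulr1 // expf_neq0 // i_neq0.
Qed.
End Main.

Theorem theorem2 (R : realType) (d : measure_display) (T : measurableType d)
    (P : probability T R) (X : {RV P >-> R}) (q : nat) :
  (1 <= q)%N ->
  {ae P, forall w, (q%:R * X w) \is a Num.int} ->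
  forall r : nat, (1 <= r)%N ->
  ('E_P[fun w => (`|X w| ^+ r)%R] < +oo)%E ->
  ((fine ('E_P[fun w => (((Num.floor (X w))%:~R : R) ^+ r)%R])%E)%:C
     = 'i ^- r * \sum_(j < q)
         cderive r (fun t => h_q q t * charfun P X t) (2 * pi * j%:R)%R)
  /\
  ((fine ('E_P[fun w => (((Num.floor (X w + 2^-1))%:~R : R) ^+ r)%R])%E)%:C
     = 'i ^- r * \sum_(j < q)
         cderive r (fun t => ht_q q t * charfun P X t) (2 * pi * j%:R)%R).
Proof.
move=> q1 hq r r1 hE.
have mX : measurable_fun setT (X : T -> R) := measurable_funPT X.
split.
- have E1 : (fun t => h_q q t * charfun P X t) = (fun t => Hm R q 0 t * charfun P X t).
    apply/funext => t; congr (_ * _); rewrite /h_q /Hm; congr (_ * _); apply: eq_bigr => j _.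
    by rewrite subr0 -[((j : nat)%:Z)%:~R]/((j : nat)%:R).
  have E2 : (fun w => (((Num.floor (X w))%:~R : R) ^+ r)%R) =
            (fun w => (((Num.floor (X w + 0))%:~R : R) ^+ r)%R).
    by apply/funext => w; rewrite addr0.
  rewrite E1 E2; apply: (@main_gen R d T P X mX q 0%N 0 r q1) => //.
  + by rewrite mul0r add0r ltr01 lexx.
  + by rewrite lexx ltr01.
- have E1 : (fun t => ht_q q t * charfun P X t) = (fun t => Hm R q (q %/ 2) t * charfun P X t).
    apply/funext => t; congr (_ * _); rewrite /ht_q /Hm; case: ifP => // oq.
    have -> : ((q - 1) %/ 2 = q %/ 2)%N.
      move/negbFE: oq => oq; have h := divn_eq q 2; rewrite modn2 oq in h.
      by rewrite {1}h addnK mulnK.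
    by [].
  rewrite E1; apply: (@main_gen R d T P X mX q (q %/ 2) 2^-1 r q1) => //.
  + exact: leq_div.
  + have h := divn_eq q 2.
    have h2 : (q %% 2 <= 1)%N by rewrite modn2; case: odd.
    have hR : (q%:R : R) = (q %/ 2)%:R * 2 + (q %% 2)%:R by rewrite {1}h natrD natrM.
    have hR2 : ((q %% 2)%:R : R) <= 1 by rewrite -(ler_nat R) in h2.
    have hR3 : (0 : R) <= (q %% 2)%:R by [].
    apply/andP; split; lra.
  + apply/andP; split; lra.
Qed.
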